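(* For every positive integer $n$, $$\vartheta_2\!\left(\sum_{k=1}^{n} \frac{2^k}{k}\right) \geq s_2(n)$$ and, more strongly, $$\vartheta_2\!\left(\sum_{k=1}^{n} \frac{2^k}{k}\right) \geq n - \left\lfloor \frac{\log n}{\log 2} \right\rfloor.$$
   Context: $\vartheta_2$ denotes the $2$-adic valuation, extended to nonzero rational numbers by $\vartheta_2(a/b) = \vartheta_2(a) - \vartheta_2(b)$. $s_2(n)$ denotes the sum of the binary digits of $n$. $\lfloor x \rfloor$ is the integer part of $x$. *)

(* Defs.v *)
From mathcomp Require Import all_boot all_order all_algebra.
Set Implicit Arguments. Unset Strict Implicit. Unset Printing Implicit Defensive.
Import Order.TTheory GRing.Theory Num.Theory.

(* 2-adic valuation of a rational q (q = numq q / denq q in lowest terms):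
   v2(q) = v2(numq q) - v2(denq q).  Meaningful for q <> 0. *)
Definition v2 (q : rat) : int :=
  (logn 2 `|numq q|%N)%:Z - (logn 2 `|denq q|%N)%:Z.

(* sum of the binary digits of n: digit i is (n %/ 2^i) %% 2; digits with
   i > n vanish since n < 2^n. *)
Definition s2 (n : nat) : nat := \sum_(i < n.+1) ((n %/ 2 ^ i) %% 2).

Definition Hsum (n : nat) : rat :=
  \sum_(1 <= k < n.+1) ((2%:R : rat) ^+ k / k%:R).

(* Main.v *)
Require Import Defs.
From mathcomp Require Import all_boot all_order all_algebra.
From mathcomp Require Import zify ring.
Import Order.TTheory GRing.Theory Num.Theory.
Local Open Scope ring_scope.

Lemma v2_frac (a b : nat) : (0 < a)%N -> (0 < b)%N ->
  v2 (a%:R / b%:R) = (logn 2 a)%:Z - (logn 2 b)%:Z.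
Proof.
move=> a0 b0; rewrite /v2; set q := (a%:R / b%:R : rat).
have hq : (numq q)%:~R = q * (denq q)%:~R :> rat by rewrite numqE.
have hi : numq q * b%:Z = a%:Z * denq q.
  apply: (@intr_inj rat); rewrite !rmorphM /= hq /q.
  have bn : (b%:R : rat) != 0 by rewrite pnatr_eq0 -lt0n.
  by rewrite -!pmulrn mulrAC divfK.

have hn : (0 < `|numq q|)%N.
  rewrite absz_gt0 numq_eq0 /q mulf_eq0 invr_eq0 !pnatr_eq0 negb_or -!lt0n a0 b0 //.
have hd : (0 < `|denq q|)%N by rewrite absz_gt0 denq_eq0.
have hn2 : (`|numq q| * b = a * `|denq q|)%N.
  by have := congr1 absz hi; rewrite !abszM.
have := congr1 (logn 2) hn2; rewrite !lognM // => e.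
apply/eqP; rewrite subr_eq addrAC eq_sym subr_eq -!PoszD e addnC //.
Qed.

Definition T (n : nat) : nat := (\sum_(k < n) k`! * (n.-1 - k)`!)%N.

Lemma T_rec n : (2 * T n.+1 = n.+1 * T n + 2 * n`!)%N.
Proof.
have e1 : (T n.+1 = 0`! * n`! + \sum_(i < n) (i.+1)`! * (n.-1 - i)`!)%N.
  rewrite /T big_ord_recl /= subn0; congr addn; apply: eq_bigr => i _.
  rewrite /bump /=; have -> : (n - (1+i) = n.-1 - i)%N by lia.
  by rewrite add1n.
have e2 : (T n.+1 = \sum_(i < n) i`! * (n - i)`! + n`! * 0`!)%N.
  by rewrite /T big_ord_recr /= subnn.
have e3 : (n.+1 * T n = \sum_(i < n) (i.+1)`! * (n.-1 - i)`! +
                         \sum_(i < n) i`! * (n - i)`!)%N.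
  rewrite /T big_distrr -big_split /=; apply: eq_bigr => j _.
  have hi := ltn_ord j. move: hi; set i := nat_of_ord j => hi.
  have -> : (n - i = (n.-1 - i).+1)%N by lia.
  rewrite !factS; have -> : (n.+1 = i.+1 + (n.-1 - i).+1)%N by lia.
  by rewrite mulnDl; ring.
rewrite e3 mul2n -addnn {1}e1 e2 fact0; ring.
Qed.

Lemma Hsum_eq n : (n`!)%:R * Hsum n = (2 ^ n * T n)%:R :> rat.
Proof.
elim: n => [|n IH]; first by rewrite /Hsum big_geq // mulr0 /T big_ord0 muln0.
rewrite /Hsum big_nat_recr //= -/(Hsum n) factS natrM mulrDr -mulrA IH.
have hn : (n.+1%:R : rat) != 0 by rewrite pnatr_eq0.
have h2 : n.+1%:R * n`!%:R * (2 ^+ n.+1 / n.+1%:R) = (n`! * 2 ^ n.+1)%:R :> rat.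
  rewrite [_ * n`!%:R]mulrC -mulrA [n.+1%:R * _]mulrCA mulfV // mulr1.
  by rewrite natrM natrX.
rewrite h2 -natrM -natrD; congr _%:R.
rewrite [in RHS]expnS -[in RHS]mulnA [in RHS]mulnCA T_rec expnS; ring.
Qed.

Local Close Scope ring_scope.
Lemma legendre m N : m <= N -> logn 2 m`! = \sum_(1 <= i < N.+1) m %/ 2 ^ i.
Proof.
move=> mN; have mN' : m.+1 <= N.+1 by [].
rewrite logn_fact // (big_cat_nat (isT : 1 <= m.+1) mN') /=.
rewrite [X in _ = _ + X]big1_seq ?addn0 // => i /andP[_].
rewrite mem_index_iota => /andP[hi _]; apply: divn_small.
apply: (ltn_trans hi); exact: ltn_expl.
Qed.

Lemma delta_sum n j : 0 < j <= n ->
  logn 2 n`! = logn 2 j`! + logn 2 (n - j)`!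
     + \sum_(1 <= i < n.+1) (2 ^ i <= j %% 2 ^ i + (n - j) %% 2 ^ i).
Proof.
move=> /andP[j0 jn].
rewrite (@legendre n n (leqnn n)) (@legendre j n jn) (@legendre (n - j) n (leq_subr j n)).
rewrite -!big_split /=; apply: eq_bigr => i _.
by rewrite -divnD ?expn_gt0 // subnKC.
Qed.

Lemma key n j : 0 < j <= n ->
  logn 2 n`! <= logn 2 ((j.-1)`! * (n - j)`!) + trunc_log 2 n.
Proof.
move=> /andP[j0 jn]; have hj : 0 < j <= n by rewrite j0.
rewrite (@delta_sum n j hj) lognM ?fact_gt0 //.
have -> : j = j.-1.+1 by rewrite prednK.
rewrite factS lognM ?fact_gt0 // prednK //.
set a := logn 2 j; set L := trunc_log 2 n.
have n0 : 0 < n by apply: leq_trans jn.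
have aj : 2 ^ a %| j := pfactor_dvdnn 2 j.
have aL : a <= L.
  apply: trunc_log_max => //; apply: leq_trans jn; exact: dvdn_leq.
have nL : n < 2 ^ L.+1 := trunc_log_ltn n (isT : 1 < 2).
suff : \sum_(1 <= i < n.+1) (2 ^ i <= j %% 2 ^ i + (n - j) %% 2 ^ i) <= L - a.
  lia.
have aL1 : L.+1 <= n.+1.
  rewrite ltnS; apply: leq_trans (ltnW (ltn_expl L (isT : 1 < 2))) (trunc_logP (isT : 1 < 2) n0).
have a1 : a.+1 <= n.+1 by apply: leq_trans aL1; rewrite ltnS.
rewrite (big_cat_nat (isT : 1 <= a.+1) a1) /=.
have aL' : a.+1 <= L.+1 by [].
rewrite (big_cat_nat aL' aL1) /=.
rewrite big1_seq ?add0n; last first.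
  move=> i /andP[_]; rewrite mem_index_iota => /andP[_ hi].
  have : 2 ^ i %| j by apply: dvdn_trans aj; apply: dvdn_exp2l; rewrite -ltnS.
  move=> hd.
  rewrite /dvdn in hd; rewrite (eqP hd) add0n leqNgt ltn_pmod ?expn_gt0 //.
rewrite [X in _ + X <= _]big1_seq ?addn0; last first.
  move=> i /andP[_]; rewrite mem_index_iota => /andP[hi _].
  have ni : n < 2 ^ i by apply: leq_trans nL _; rewrite leq_exp2l.
  have h1 : j < 2 ^ i by apply: leq_ltn_trans ni.
  have h2 : n - j < 2 ^ i by apply: leq_ltn_trans ni; rewrite leq_subr.
  rewrite (modn_small h1) (modn_small h2) subnKC //.
  by rewrite leqNgt ni.
have -> : L - a = \sum_(a.+1 <= i < L.+1) 1 by rewrite sum_nat_const_nat muln1 subSS.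
apply: leq_sum => i _; exact: leq_b1.
Qed.

Lemma s2_tele n N : \sum_(i < N) ((n %/ 2 ^ i) %% 2) + \sum_(i < N) n %/ 2 ^ i.+1
  + n %/ 2 ^ N = n.
Proof.
elim: N => [|N IH]; first by rewrite !big_ord0 expn0 divn1.
rewrite !big_ord_recr /=; rewrite -[RHS]IH.
have : n %/ 2 ^ N = (n %/ 2 ^ N.+1) * 2 + (n %/ 2 ^ N) %% 2.
  by rewrite expnSr divnMA -divn_eq.
move=> h; rewrite {2}h; ring.
Qed.

Lemma s2_legendre n : s2 n + logn 2 n`! = n.
Proof.
rewrite /s2 big_ord_recr /= logn_fact //.
have hn : n %/ 2 ^ n = 0 by apply: divn_small; apply: ltn_expl.
rewrite hn mod0n addn0.
have e := s2_tele n n; rewrite hn addn0 in e; rewrite -[RHS]e; congr addn.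
by rewrite big_add1 /= big_mkord.
Qed.

Lemma T_gt0 n : 0 < n -> 0 < T n.
Proof.
case: n => // n _; rewrite /T big_ord_recl /=.
by rewrite ltn_addr // muln_gt0 !fact_gt0.
Qed.

Lemma logT n : 0 < n -> logn 2 n`! <= logn 2 (T n) + trunc_log 2 n.
Proof.
move=> n0; rewrite addnC -leq_subLR -(@pfactor_dvdn 2 _ (T n)) ?T_gt0 //.
apply: dvdn_sum => k _.
have hk := ltn_ord k.
have hj : 0 < k.+1 <= n by rewrite hk.
have := @key n k.+1 hj; rewrite /= => h.
rewrite pfactor_dvdn ?muln_gt0 ?fact_gt0 //.
rewrite leq_subLR addnC.
have -> : (n.-1 - k = n - k.+1) by lia.
exact: h.
Qed.

Local Open Scope ring_scope.

Theorem theorem2 (n : nat) (hn : (0 < n)%N) :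
  (s2 n)%:Z <= v2 (Hsum n) /\ n%:Z - (trunc_log 2 n)%:Z <= v2 (Hsum n).
Proof.
have hf : (n`!%:R : rat) != 0 by rewrite pnatr_eq0 -lt0n fact_gt0.
have hH : Hsum n = (2 ^ n * T n)%:R / (n`!)%:R.
  by rewrite -Hsum_eq mulrC mulKf.
have hT := @T_gt0 n hn.
rewrite hH v2_frac ?muln_gt0 ?expn_gt0 ?fact_gt0 //= lognM ?expn_gt0 // pfactorK //.
have e1 := s2_legendre n.
have e2 := @logT n hn.
split; lia.
Qed.
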